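(* For every integer $n \geq 5$, $\gamma_{b,2}(C_5 \square C_n) = n$.
   Context: For a graph $G$, a $2$-limited broadcast is a function $f: V(G) \to \{0,1,2\}$. A vertex $u$ hears the broadcast from $v$ if $f(v) > 0$ and $d(u,v) \leq f(v)$, where $d$ is the distance in $G$. The broadcast $f$ is dominating if every vertex of $G$ hears the broadcast from some vertex. The cost of $f$ is $\sum_{v \in V(G)} f(v)$. The $2$-limited broadcast domination number $\gamma_{b,2}(G)$ is the minimum cost of a $2$-limited dominating broadcast on $G$. $C_n$ denotes the cycle on $n$ vertices and $\square$ the Cartesian product of graphs. *)

(* Defs.v *)
From mathcomp Require Import all_boot.
Set Implicit Arguments. Unset Strict Implicit. Unset Printing Implicit Defensive.

Fixpoint ball (T : finType) (e : rel T) (k : nat) (u : T) : {set T} :=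
  match k with
  | 0 => [set u]
  | k'.+1 => ball e k' u :|: [set y | [exists x in ball e k' u, e x y]]
  end.

Definition broadcast2 (T : finType) := {ffun T -> 'I_3}.

Definition hears (T : finType) (e : rel T) (f : broadcast2 T) (u v : T) : bool :=
  (0 < f v) && (u \in ball e (f v) v).

Definition dominating (T : finType) (e : rel T) (f : broadcast2 T) : bool :=
  [forall u, exists v, hears e f u v].

Definition cost (T : finType) (f : broadcast2 T) : nat := \sum_(v : T) (f v : nat).

(* The default value 2*|V| is an upper bound for every cost, and the
   constant-1 broadcast is always dominating, so this is the true minimum. *)
Definition gamma_b2 (T : finType) (e : rel T) : nat :=
  \big[minn/(#|T|).*2]_(f : broadcast2 T | dominating e f) cost f.

Definition cycle_adj (n : nat) : rel 'I_n :=
  fun i j => (j == i.+1 %% n :> nat) || (i == j.+1 %% n :> nat).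

Definition cart_adj (T1 T2 : finType) (e1 : rel T1) (e2 : rel T2) : rel (T1 * T2) :=
  fun x y => ((x.1 == y.1) && e2 x.2 y.2) || ((x.2 == y.2) && e1 x.1 y.1).
Arguments cycle_adj n : clear implicits.

(* Main.v *)
Require Import Defs.
From mathcomp Require Import all_boot zify.
Set Implicit Arguments. Unset Strict Implicit. Unset Printing Implicit Defensive.

Definition cdiff (n x y : nat) := if y <= x then x - y else x + n - y.
Definition cd (n x y : nat) := minn (cdiff n x y) (cdiff n y x).

Lemma mod_lt2 (n x : nat) : x < n + n -> x %% n = if x < n then x else x - n.
Proof.
move=> h; case: ltnP => h2; first by rewrite modn_small.
have -> : x = 1 * n + (x - n) by lia.
by rewrite modnMDl modn_small; lia.
Qed.

Lemma adj_eq (n x y : nat) : 0 < n -> x < n -> y < n ->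
  (y == x.+1 %% n) = ((x.+1 < n) && (y == x.+1)) || ((x.+1 == n) && (y == 0)).
Proof.
move=> n0 xn yn; rewrite (@mod_lt2 n x.+1); last by lia.
case: ltnP => h /=; first by case: (y == x.+1); lia.
have -> : x.+1 - n = 0 by lia.
by have -> : x.+1 == n by lia.
Qed.

Lemma cd_step (n x y w : nat) : 0 < n -> x < n -> y < n -> w < n ->
  (y == x.+1 %% n) || (x == y.+1 %% n) -> cd n y w <= (cd n x w).+1.
Proof.
move=> n0 xn yn wn; rewrite !adj_eq // /cd /cdiff => /orP[/orP[]|/orP[]] /andP[h1 /eqP h2]; subst;
rewrite ?leq0n ?add0n ?subn0; repeat case: ifP => ?; lia.
Qed.

Lemma cd0 (n x y : nat) : x < n -> y < n -> (cd n x y == 0) = (x == y).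
Proof. move=> xn yn; rewrite /cd /cdiff; repeat case: ifP => ?; lia. Qed.

Lemma cd_closer (n x w : nat) : 0 < n -> x < n -> w < n -> 0 < cd n x w ->
  exists2 y, y < n & ((y == x.+1 %% n) || (x == y.+1 %% n)) && (cd n y w == (cd n x w).-1).
Proof.
move=> n0 xn wn; rewrite /cd /cdiff => hpos.
case: (leqP (cdiff n x w) (cdiff n w x)) => hc.
- (* move x towards w backwards: y = x - 1 *)
  exists (if x == 0 then n.-1 else x.-1); first by case: ifP; lia.
  rewrite !adj_eq //; try by case: ifP; lia.
  move: hc hpos; rewrite /cdiff; repeat case: ifP => ?; lia.
- exists (modn x.+1 n); first by rewrite ltn_mod.
  rewrite (@mod_lt2 n x.+1); last by lia.
  rewrite !adj_eq //; try by case: ifP; lia.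
  move: hc hpos; rewrite /cdiff; repeat case: ifP => ?; lia.
Qed.

Section Ball.
Variable n : nat.
Hypothesis n0 : 0 < n.
Local Notation V := ('I_5 * 'I_n)%type.
Local Notation E := (cart_adj (cycle_adj 5) (cycle_adj n)).

Definition dst (u v : V) := cd 5 u.1 v.1 + cd n u.2 v.2.

Lemma cd_same m (x : 'I_m) : cd m x x = 0.
Proof. by apply/eqP; rewrite cd0. Qed.

Lemma dst_step (x y v : V) : E x y -> dst y v <= (dst x v).+1.
Proof.
rewrite /E /cart_adj /dst /cycle_adj => /orP[]/andP[/eqP h1 h2].
- by rewrite h1 -addnS leq_add2l; apply: (@cd_step n x.2 y.2 v.2 n0 (ltn_ord _) (ltn_ord _) (ltn_ord _) h2).
- by rewrite h1 -addSn leq_add2r; apply: (@cd_step 5 x.1 y.1 v.1 isT (ltn_ord _) (ltn_ord _) (ltn_ord _) h2).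
Qed.

Lemma aux1 a b k : a + b = k.+1 -> 0 < b -> a + b.-1 <= k. Proof. lia. Qed.
Lemma aux2 a b k : a + b = k.+1 -> 0 < a -> a.-1 + b <= k. Proof. lia. Qed.
Lemma aux3 a b k : a + b = k.+1 -> a = 0 -> 0 < b. Proof. lia. Qed.

Lemma ball_iff k (u v : V) : (u \in ball E k v) = (dst u v <= k).
Proof.
elim: k u => [|k IH] u /=.
- case: u => a b; case: v => c d.
  by rewrite in_set1 leqn0 /dst addn_eq0 !cd0 ?ltn_ord // xpair_eqE /=.
rewrite in_setU IH in_set.
apply/orP/idP => [[h|/existsP[x /andP[hx hxu]]]|h].
- by apply: leqW.
- by rewrite IH in hx; have := dst_step v hxu; lia.
case: (leqP (dst u v) k) => hk; first by left.
right; have hd : dst u v = k.+1 by lia.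
case: (posnP (cd 5 u.1 v.1)) => h5.
-
  have hc : 0 < cd n u.2 v.2 by apply: aux3 hd h5.
  have [y yn /andP[hadj /eqP hy]] := @cd_closer n u.2 v.2 n0 (ltn_ord _) (ltn_ord _) hc.
  apply/existsP; exists (u.1, Ordinal yn); rewrite IH /dst /= hy.
  apply/andP; split; first by apply: aux1 hd hc.
  rewrite /cart_adj /cycle_adj /= eqxx /=; apply/orP; left; by rewrite orbC.
- have [y yn /andP[hadj /eqP hy]] := @cd_closer 5 u.1 v.1 isT (ltn_ord _) (ltn_ord _) h5.
  apply/existsP; exists (Ordinal yn, u.2); rewrite IH /dst /= hy.
  apply/andP; split; first by apply: aux2 hd h5.
  rewrite /cart_adj /cycle_adj /=; apply/orP; right; by rewrite eqxx /= orbC.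
Qed.
End Ball.

Ltac ifs := repeat match goal with |- context[if ?b then _ else _] =>
  lazymatch b with context[if _ then _ else _] => fail | _ => case: (boolP b) => ? end end.

Lemma cd_vals (n j : nat) : 5 <= n -> j < n ->
  [/\ cd n j ((j+1) %% n) = 1, cd n j ((j+n-1) %% n) = 1,
      cd n j ((j+2) %% n) = 2 & cd n j ((j+n-2) %% n) = 2].
Proof.
move=> n5 jn.
rewrite !(@mod_lt2 n); try lia.
rewrite /cd /cdiff; split; ifs; lia.
Qed.

Lemma cd_small (n j c : nat) : 5 <= n -> j < n -> c < n -> cd n j c <= 2 ->
  c = j \/ c = (j+1) %% n \/ c = (j+n-1) %% n \/ c = (j+2) %% n \/ c = (j+n-2) %% n.
Proof.
move=> n5 jn cn.
rewrite !(@mod_lt2 n); try lia.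
rewrite /cd /cdiff; ifs; lia.
Qed.

Lemma cd5_le2 (x y : nat) : x < 5 -> y < 5 -> cd 5 x y <= 2.
Proof. rewrite /cd /cdiff => *; repeat case: ifP => ?; lia. Qed.

Definition rs m := if m == 0 then 1 else if m == 1 then 3 else 5.

Lemma rowsum (r0 : 'I_5) m : \sum_(r : 'I_5) (cd 5 r r0 <= m) = rs m.
Proof.
case: m => [|[|m]]; case: r0 => [[|[|[|[|[|?]]]]] ?] //;
  by rewrite !big_ord_recr big_ord0 /=.
Qed.

Section Col.
Variable n : nat.
Hypothesis n5 : 5 <= n.
Let n0 : 0 < n. Proof. by apply: leq_trans n5. Qed.
Local Notation V := ('I_5 * 'I_n)%type.
Local Notation E := (cart_adj (cycle_adj 5) (cycle_adj n)).
Variable f : broadcast2 V.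

Definition col (t : nat) : 'I_n := Ordinal (ltn_pmod t n0).
Definition acnt (c : 'I_n) := \sum_(r : 'I_5) ((f (r, c) : nat) == 1).
Definition bcnt (c : 'I_n) := \sum_(r : 'I_5) ((f (r, c) : nat) == 2).
Definition h1 d := if d == 0 then 3 else if d == 1 then 1 else 0.
Definition h2 d := if d == 0 then 5 else if d == 1 then 3 else if d == 2 then 1 else 0.

Lemma gen_sum (r0 : 'I_5) d k : k <= 2 ->
  \sum_(r : 'I_5) ((0 < k) && (cd 5 r r0 + d <= k)) <= (k == 1) * h1 d + (k == 2) * h2 d.
Proof.
move=> hk.
case: (leqP d k) => hd; last first.
  by rewrite big1 // => r _; case: andP => // -[]; lia.
case: (posnP k) => k0.
  by rewrite big1 // => r _; rewrite k0.
rewrite (eq_bigr (fun r : 'I_5 => nat_of_bool (cd 5 r r0 <= k - d))); last by move=> r _; congr nat_of_bool; apply/idP/idP; lia.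
rewrite rowsum /rs /h1 /h2.
case: k hk hd k0 => [|[|[|k]]] // _; case: d => [|[|[|d]]] //.
Qed.

Lemma hears_sum (j : 'I_n) (v : V) :
  \sum_(r : 'I_5) hears E f (r, j) v <=
  ((f v : nat) == 1) * h1 (cd n j v.2) + ((f v : nat) == 2) * h2 (cd n j v.2).
Proof.
rewrite /hears.
under eq_bigr => r _ do rewrite ball_iff // /dst /=.
apply: gen_sum; by have := ltn_ord (f v).
Qed.

Definition Hc (j c : 'I_n) := h1 (cd n j c) * acnt c + h2 (cd n j c) * bcnt c.

Lemma sum_g (j : 'I_n) :
  \sum_(v : V) (((f v : nat) == 1) * h1 (cd n j v.2) + ((f v : nat) == 2) * h2 (cd n j v.2))
  = \sum_(c : 'I_n) Hc j c.
Proof.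
set G := fun v : V => ((f v : nat) == 1) * h1 (cd n j v.2) + ((f v : nat) == 2) * h2 (cd n j v.2).
rewrite (eq_bigr (fun v => G (v.1, v.2))); last by case.
rewrite -(pair_bigA _ (fun r c => G (r, c))) /= exchange_big /=.
apply: eq_bigr => c _; rewrite /G big_split /= /Hc /acnt /bcnt !big_distrr /=.
by congr (_ + _); apply: eq_bigr => r _; rewrite mulnC.
Qed.

Lemma pick5 (F : 'I_n -> nat) (c1 c2 c3 c4 c5 : 'I_n) :
  \sum_(c : 'I_n) ((if c == c1 then F c1 else 0) + (if c == c2 then F c2 else 0) +
     (if c == c3 then F c3 else 0) + (if c == c4 then F c4 else 0) + (if c == c5 then F c5 else 0))
  = F c1 + F c2 + F c3 + F c4 + F c5.
Proof.
by rewrite !big_split /= -!big_mkcond /= !big_pred1_eq.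
Qed.

Lemma colcon (j : 'I_n) : dominating E f -> bcnt j = 0 ->
  5 <= 3 * acnt j + acnt (col (j+1)) + acnt (col (j+n-1)) + 3 * bcnt (col (j+1))
       + 3 * bcnt (col (j+n-1)) + bcnt (col (j+2)) + bcnt (col (j+n-2)).
Proof.
move=> hdom hb.
have h5 : 5 <= \sum_(v : V) \sum_(r : 'I_5) hears E f (r, j) v.
  rewrite exchange_big /=.
  apply: leq_trans (_ : \sum_(r : 'I_5) 1 <= _); first by rewrite sum1_card card_ord.
  apply: leq_sum => r _.
  have /existsP[v hv] := forallP hdom (r, j).
  by rewrite (bigD1 v) //= hv.
apply: (leq_trans h5); apply: leq_trans; first by apply: leq_sum => v _; exact: hears_sum j v.
rewrite sum_g.
have [e1 e2 e3 e4] := @cd_vals n j n5 (ltn_ord j).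
set S := fun c : 'I_n => (if c == j then Hc j j else 0) + (if c == col (j+1) then Hc j (col (j+1)) else 0) +
     (if c == col (j+n-1) then Hc j (col (j+n-1)) else 0) + (if c == col (j+2) then Hc j (col (j+2)) else 0)
     + (if c == col (j+n-2) then Hc j (col (j+n-2)) else 0).
apply: (@leq_trans (\sum_(c : 'I_n) S c)).
  apply: leq_sum => c _; rewrite /S.
  case: (leqP (cd n j c) 2) => hc; last first.
    by rewrite (_ : Hc j c = 0) //; rewrite /Hc /h1 /h2; move: hc; case: (cd n j c) => [|[|[|m]]].
  have [] := @cd_small n j c n5 (ltn_ord j) (ltn_ord c) hc.
  - by move=> /val_inj ->; rewrite eqxx; lia.
  case=> [h|[h|[h|h]]].
  - have -> : c = col (j+1) by apply: val_inj; rewrite /= h.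
    by rewrite eqxx; lia.
  - have -> : c = col (j+n-1) by apply: val_inj; rewrite /= h.
    by rewrite eqxx; lia.
  - have -> : c = col (j+2) by apply: val_inj; rewrite /= h.
    by rewrite eqxx; lia.
  - have -> : c = col (j+n-2) by apply: val_inj; rewrite /= h.
    by rewrite eqxx; lia.
rewrite /S pick5 /Hc hb /= e1 e2 e3 e4 cd_same /h1 /h2 /=.
lia.
Qed.
End Col.

Definition m5 x := minn x 5.
Definition psitbl : seq nat := [:: 0; 4; 4; 4; 4; 4; 3; 4; 4; 4; 4; 4; 3; 4; 4; 4; 4; 4; 3; 4; 4; 4; 4; 4; 3; 4; 4; 4; 4; 4; 3; 4; 4; 4; 4; 4; 2; 4; 4; 4; 4; 4; 3; 4; 4; 4; 4; 4; 3; 4; 4; 4; 4; 4; 3; 4; 4; 4; 4; 4; 3; 4; 4; 4; 4; 4; 3; 4; 4; 4; 4; 4; 2; 4; 4; 4; 4; 4; 3; 4; 4; 4; 4; 4; 3; 4; 4; 4; 4; 4; 3; 4; 4; 4; 4; 4; 3; 4; 4; 4; 4; 4; 3; 4; 4; 4; 4; 4; 2; 4; 4; 4; 4; 4; 3; 4; 4; 4; 4; 4; 3; 4; 4; 4; 4; 4; 3; 4; 4; 4; 4; 4; 3; 4; 4; 4; 4; 4; 3; 4; 4; 4; 4; 4; 2; 4; 4; 4; 4; 4; 3; 4; 4; 4; 4; 4; 3; 4; 4; 4; 4; 4; 3; 4; 4; 4; 4; 4; 3; 4; 4; 4; 4; 4; 3; 4; 4; 4; 4; 4; 2; 4; 4;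 4; 4; 4; 3; 4; 4; 4; 4; 4; 3; 4; 4; 4; 4; 4; 3; 4; 4; 4; 4; 4; 3; 4; 4; 4; 4; 4; 3; 4; 4; 4; 4; 4; 1; 4; 4; 4; 4; 4; 3; 4; 4; 4; 4; 4; 3; 4; 4; 4; 4; 4; 3; 4; 4; 4; 4; 4; 3; 4; 4; 4; 4; 4; 3; 4; 4; 4; 4; 4; 2; 4; 4; 4; 4; 4; 3; 4; 4; 4; 4; 4; 3; 4; 4; 4; 4; 4; 3; 4; 4; 4; 4; 4; 3; 4; 4; 4; 4; 4; 3; 4; 4; 4; 4; 4; 2; 4; 4; 4; 4; 4; 3; 4; 4; 4; 4; 4; 3; 4; 4; 4; 4; 4; 3; 4; 4; 4; 4; 4; 3; 4; 4; 4; 4; 4; 3; 4; 4; 4; 4; 4; 2; 4; 4; 4; 4; 4; 1; 4; 4; 4; 4; 4; 3; 4; 4; 4; 4; 4; 3; 4; 4; 4; 4; 4; 3; 4; 4; 4; 4; 4; 3; 4; 4; 4; 4; 4; 2; 4; 4; 4; 4; 4; 3; 4; 4; 4; 4; 4; 3; 4; 4; 4; 4; 4; 3; 4; 4; 4; 4; 4; 3; 4; 4; 4; 4; 4; 3; 4; 4; 4; 4; 4; 2; 4; 4; 4; 4; 4; 3; 4; 4; 4; 4; 4; 3; 4; 4; 4; 4; 4; 3; 4; 4; 4; 4; 4; 3; 4; 4; 4; 4; 4; 3; 4; 4; 4; 4; 4; 1; 4; 4; 4; 4; 4; 3; 4; 4; 4; 4; 4; 3; 4; 4; 4; 4; 4;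 3; 4; 4; 4; 4; 4; 3; 4; 4; 4; 4; 4; 3; 4; 4; 4; 4; 4; 2; 4; 4; 4; 4; 4; 3; 4; 4; 4; 4; 4; 3; 4; 4; 4; 4; 4; 3; 4; 4; 4; 4; 4; 3; 4; 4; 4; 4; 4; 3; 4; 4; 4; 4; 4; 2; 4; 4; 4; 4; 4; 3; 4; 4; 4; 4; 4; 3; 4; 4; 4; 4; 4; 3; 4; 4; 4; 4; 4; 3; 4; 4; 4; 4; 4; 3; 4; 4; 4; 4; 4; 2; 4; 4; 4; 4; 4; 2; 4; 4; 4; 4; 4; 3; 4; 4; 4; 4; 4; 3; 4; 4; 4; 4; 4; 3; 4; 4; 4; 4; 4; 3; 4; 4; 4; 4; 4; 2; 4; 4; 4; 4; 4; 3; 4; 4; 4; 4; 4; 3; 4; 4; 4; 4; 4; 3; 4; 4; 4; 4; 4; 3; 4; 4; 4; 4; 4; 3; 4; 4; 4; 4; 4; 2; 4; 4; 4; 4; 4; 3; 4; 4; 4; 4; 4; 2; 4; 4; 4; 4; 4; 3; 4; 4; 4; 4; 4; 3; 4; 4; 4; 4; 4; 3; 4; 4; 4; 4; 4; 1; 4; 4; 4; 4; 4; 3; 4; 4; 4; 4; 4; 3; 4; 4; 4; 4; 4; 3; 4; 4; 4; 4; 4; 3; 4; 4; 4; 4; 4; 3; 4; 4; 4; 4; 4; 1; 4; 4; 4; 4; 4; 3; 4; 4; 4; 4; 4; 3; 4; 4; 4; 4; 4; 3; 4; 4; 4; 4; 4; 3; 4; 4; 4; 4; 4; 3; 4; 4;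 4; 4; 4; 2; 4; 4; 4; 4; 4; 3; 4; 4; 4; 4; 4; 3; 4; 4; 4; 4; 4; 3; 4; 4; 4; 4; 4; 3; 4; 4; 4; 4; 4; 3; 4; 4; 4; 4; 4; 2; 4; 4; 4; 4; 4; 2; 4; 4; 4; 4; 4; 3; 4; 4; 4; 4; 4; 3; 4; 4; 4; 4; 4; 3; 4; 4; 4; 4; 4; 3; 4; 4; 4; 4; 4; 2; 4; 4; 4; 4; 4; 3; 4; 4; 4; 4; 4; 3; 4; 4; 4; 4; 4; 3; 4; 4; 4; 4; 4; 3; 4; 4; 4; 4; 4; 3; 4; 4; 4; 4; 4; 2; 4; 4; 4; 4; 4; 3; 4; 4; 4; 4; 4; 3; 4; 4; 4; 4; 4; 3; 2; 4; 4; 4; 4; 3; 4; 4; 4; 4; 4; 3; 4; 4; 4; 4; 4; 1; 4; 4; 4; 4; 4; 3; 4; 4; 4; 4; 4; 3; 4; 4; 4; 4; 4; 3; 4; 4; 4; 4; 4; 3; 4; 4; 4; 4; 4; 3; 4; 4; 4; 4; 4; 2; 4; 4; 4; 4; 4; 3; 4; 4; 4; 4; 4; 3; 4; 4; 4; 4; 4; 3; 4; 4; 4; 4; 4; 3; 4; 4; 4; 4; 4; 3; 4; 4; 4; 4; 4; 2; 4; 4; 4; 4; 4; 3; 4; 4; 4; 4; 4; 3; 4; 4; 4; 4; 4; 3; 4; 4; 4; 4; 4; 3; 4; 4; 4; 4; 4; 3; 4; 4; 4; 4; 4; 2; 4; 4; 4; 4; 4; 2; 4; 4; 4; 4; 4;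 3; 4; 4; 4; 4; 4; 3; 4; 4; 4; 4; 4; 3; 4; 4; 4; 4; 4; 3; 4; 4; 4; 4; 4; 2; 4; 4; 4; 4; 4; 2; 4; 4; 4; 4; 4; 3; 4; 4; 4; 4; 4; 3; 4; 4; 4; 4; 4; 3; 4; 4; 4; 4; 4; 3; 4; 4; 4; 4; 4; 2; 4; 4; 4; 4; 4; 3; 4; 4; 4; 4; 4; 3; 4; 4; 4; 4; 4; 3; 3; 4; 4; 4; 4; 3; 3; 4; 4; 4; 4; 3; 4; 4; 4; 4; 4; 1; 4; 4; 4; 4; 4; 3; 4; 4; 4; 4; 4; 3; 4; 4; 4; 4; 4; 3; 4; 4; 4; 4; 4; 3; 4; 4; 4; 4; 4; 3; 4; 4; 4; 4; 4; 2; 4; 4; 4; 4; 4; 3; 4; 4; 4; 4; 4; 3; 4; 4; 4; 4; 4; 3; 4; 4; 4; 4; 4; 3; 4; 4; 4; 4; 4; 3; 4; 4; 4; 4; 4; 2; 4; 4; 4; 4; 4; 3; 4; 4; 4; 4; 4; 3; 4; 4; 4; 4; 4; 3; 4; 4; 4; 4; 4; 3; 4; 4; 4; 4; 4; 3; 4; 4; 4; 4; 4; 2; 4; 4; 4; 4; 4; 2; 4; 4; 4; 4; 4; 3; 4; 4; 4; 4; 4; 3; 4; 4; 4; 4; 4; 3; 4; 4; 4; 4; 4; 3; 4; 4; 4; 4; 4; 2; 4; 4; 4; 4; 4; 3; 4; 4; 4; 4; 4; 3; 4; 4; 4; 4; 4; 3; 4; 4; 4; 4; 4; 3; 4; 4;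 4; 4; 4; 3; 4; 4; 4; 4; 4; 2; 4; 4; 4; 4; 4; 3; 4; 4; 4; 4; 4; 3; 4; 4; 4; 4; 4; 3; 3; 4; 4; 4; 4; 3; 4; 4; 4; 4; 4; 3; 4; 4; 4; 4; 4].
Definition psi (U P Q E : nat) := nth 0 psitbl (U * 216 + P * 36 + Q * 6 + E).
Arguments psi : simpl never.
Definition nU (U P Q E a b : nat) := m5 (P + a + 3 * b).
Definition nP (U P Q E a b : nat) := if 0 < b then 5 else m5 (Q + 3 * a).
Definition nQ (U P Q E a b : nat) := m5 (a + 3 * b + E).
Definition nE (U P Q E a b : nat) := m5 b.

Definition chk := all (fun U => all (fun P => all (fun Q => all (fun E => all (fun a => all (fun b =>
  (5 <= U + b) ==> (psi (nU U P Q E a b) (nP U P Q E a b) (nQ U P Q E a b) (nE U P Q E a b) + 1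
                     <= psi U P Q E + a + 2 * b)) (iota 0 6)) (iota 0 6)) (iota 0 6)) (iota 0 6)) (iota 0 6)) (iota 0 6).

Lemma chk_ok : chk.
Proof. by vm_compute. Qed.

Lemma chk_use U P Q E a b : U <= 5 -> P <= 5 -> Q <= 5 -> E <= 5 -> a <= 5 -> b <= 5 ->
  5 <= U + b ->
  psi (nU U P Q E a b) (nP U P Q E a b) (nQ U P Q E a b) (nE U P Q E a b) + 1
                     <= psi U P Q E + a + 2 * b.
Proof.
move=> hU hP hQ hE ha hb hv.
have := chk_ok; rewrite /chk.
have mi x : x <= 5 -> x \in iota 0 6 by rewrite mem_iota; lia.
move=> /allP /(_ U (mi _ hU)) /allP /(_ P (mi _ hP)) /allP /(_ Q (mi _ hQ)) /allP /(_ E (mi _ hE))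
  /allP /(_ a (mi _ ha)) /allP /(_ b (mi _ hb)).
by move/implyP; apply.
Qed.


Lemma shift_sum (k : nat) (F : nat -> nat) : F k = F (k + k.+1) ->
  \sum_(i < k.+1) F (k.+1 + i - 1) = \sum_(i < k.+1) F (k.+1 + i).
Proof.
move=> hF; rewrite big_ord_recl big_ord_recr /= addnC.
congr (_ + _); last by rewrite (_ : k.+1 + 0 - 1 = k) ?hF ?addnS ?addSn //; lia.
by apply: eq_bigr => i _; rewrite /bump /=; congr F; lia.
Qed.

Section Seq.
Variable n : nat.
Hypothesis n5 : 5 <= n.
Variables A B : nat -> nat.
Hypothesis perA : forall t, A (t + n) = A t.
Hypothesis perB : forall t, B (t + n) = B t.
Hypothesis bndA : forall t, A t <= 5.
Hypothesis bndB : forall t, B t <= 5.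
Hypothesis con : forall t, 2 <= t -> B t = 0 ->
  5 <= 3 * A t + A (t+1) + A (t-1) + 3 * B (t+1) + 3 * B (t-1) + B (t+2) + B (t-2).

Definition sE t := m5 (B t).
Definition sQ t := m5 (A t + 3 * B t + B (t-1)).
Definition sP t := if 0 < B t then 5 else m5 (3 * A t + A (t-1) + 3 * B (t-1) + B (t-2)).
Definition sU t := if 0 < B (t-1) then 5 else
   m5 (3 * A (t-1) + A (t-2) + 3 * B (t-2) + B (t-3) + A t + 3 * B t).
Definition ps t := psi (sU t) (sP t) (sQ t) (sE t).

Lemma step_ok t : 3 <= t -> ps (t+1) + 1 <= ps t + A (t+1) + 2 * B (t+1).
Proof.
move=> t3.
have q1 : t + 1 - 1 = t by lia.
have q2 : t + 1 - 2 = t - 1 by lia.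
have q3 : t + 1 - 3 = t - 2 by lia.
have mm x y : m5 (m5 x + y) = m5 (x + y) by rewrite /m5; lia.
have m55 y : m5 (5 + y) = 5 by rewrite /m5; lia.
have e1 : nU (sU t) (sP t) (sQ t) (sE t) (A (t+1)) (B (t+1)) = sU (t+1).
  rewrite /nU /sU /sP q1 q2 q3.
  case: (posnP (B t)) => hb; last by rewrite -!addnA m55.
  by rewrite -!addnA mm; congr m5; lia.
have e2 : nP (sU t) (sP t) (sQ t) (sE t) (A (t+1)) (B (t+1)) = sP (t+1).
  rewrite /nP /sP /sQ q1 q2.
  case: (posnP (B (t+1))) => hb //.
  by rewrite mm; congr m5; lia.
have e3 : nQ (sU t) (sP t) (sQ t) (sE t) (A (t+1)) (B (t+1)) = sQ (t+1).
  rewrite /nQ /sQ /sE q1 addnC mm; congr m5; lia.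
have e4 : nE (sU t) (sP t) (sQ t) (sE t) (A (t+1)) (B (t+1)) = sE (t+1) by [].
rewrite /ps -e1 -e2 -e3 -e4; apply: chk_use.
- by rewrite /sU /m5; case: ifP => _; lia.
- by rewrite /sP /m5; case: ifP => _; lia.
- by rewrite /sQ /m5; lia.
- by rewrite /sE /m5; lia.
- by [].
- by [].
rewrite /sU; case: (posnP (B (t-1))) => hb; last by rewrite leq_addr.
have := con (_ : 2 <= t - 1) hb.
have r1 : t - 1 + 1 = t by lia.
have r2 : t - 1 - 1 = t - 2 by lia.
have r3 : t - 1 + 2 = t + 1 by lia.
have r4 : t - 1 - 2 = t - 3 by lia.
rewrite r1 r2 r3 r4 /m5 => h; lia.
Qed.


Lemma ps_per t : 3 <= t -> ps (t + n) = ps t.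
Proof.
move=> t3; rewrite /ps /sU /sP /sQ /sE.
have r1 : t + n - 1 = (t - 1) + n by lia.
have r2 : t + n - 2 = (t - 2) + n by lia.
have r3 : t + n - 3 = (t - 3) + n by lia.
by rewrite r1 r2 r3 !perA !perB.
Qed.

Lemma seq_bound : n <= \sum_(i < n) (A (n + i) + 2 * B (n + i)).
Proof.
have h : \sum_(i < n) (ps (n + i) + 1) <= \sum_(i < n) (ps (n + i - 1) + (A (n + i) + 2 * B (n + i))).
  apply: leq_sum => i _.
  have r : n + i - 1 + 1 = n + i by lia.
  have := @step_ok (n + i - 1) (_ : 3 <= n + i - 1).
  rewrite r -addnA; apply; lia.
rewrite !big_split /= sum1_card card_ord in h.
have e : \sum_(i < n) ps (n + i - 1) = \sum_(i < n) ps (n + i).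
  have hn : n = n.-1.+1 by lia.
  rewrite hn shift_sum //.
  by rewrite -hn -ps_per //; lia.
rewrite e sum_nat_const muln0 addn0 in h; rewrite big_split /=.
have -> : \sum_(i < n) 2 * B (n + i) = \sum_(i < n) B (n + i) + \sum_(i < n) B (n + i).
  by rewrite -big_split; apply: eq_bigr => i _; rewrite mul2n -addnn.
by rewrite leq_add2l in h.
Qed.
End Seq.

Lemma mod_sub (n t k : nat) : 0 < n -> k <= n -> k <= t -> (t %% n + n - k) %% n = (t - k) %% n.
Proof.
move=> n0 kn kt.
rewrite -addnBA // modnDml (_ : t + (n - k) = (t - k) + n); last by lia.
by rewrite modnDr.
Qed.

Section Lower.
Variable n : nat.
Hypothesis n5 : 5 <= n.
Local Notation V := ('I_5 * 'I_n)%type.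
Local Notation E := (cart_adj (cycle_adj 5) (cycle_adj n)).

Lemma cnt_le5 (f : broadcast2 V) c k : \sum_(r : 'I_5) ((f (r, c) : nat) == k) <= 5.
Proof.
apply: leq_trans (_ : \sum_(r : 'I_5) 1 <= _); last by rewrite sum1_card card_ord.
by apply: leq_sum => r _; case: (_ == _).
Qed.

Lemma cost_cols (f : broadcast2 V) :
  cost f = \sum_(c : 'I_n) (acnt f c + 2 * bcnt f c).
Proof.
rewrite /cost (eq_bigr (fun v => (((f v : nat) == 1) + 2 * ((f v : nat) == 2)))); last first.
  by move=> v _; case: (f v) => [[|[|[|k]]] hk].
rewrite (eq_bigr (fun v => (fun r c => (((f (r, c) : nat) == 1) + 2 * ((f (r, c) : nat) == 2))) v.1 v.2)); last by case.
rewrite -(pair_bigA _ (fun r c => (((f (r, c) : nat) == 1) + 2 * ((f (r, c) : nat) == 2)))) /= exchange_big /=.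
apply: eq_bigr => c _; rewrite big_split /= /acnt /bcnt big_distrr /=.
done.
Qed.

Lemma lower (f : broadcast2 V) : dominating E f -> n <= cost f.
Proof.
move=> hdom.
have n0 : 0 < n by lia.
pose A t := acnt f (col n5 t).
pose B t := bcnt f (col n5 t).
have colper t : col n5 (t + n) = col n5 t by apply: val_inj; rewrite /= modnDr.
have cp k t : k <= t -> k <= n -> col n5 (col n5 t + n - k) = col n5 (t - k).
  by move=> kt kn; apply: val_inj; rewrite /= mod_sub.
have cp' k t : col n5 (col n5 t + k) = col n5 (t + k).
  by apply: val_inj; rewrite /= modnDml.
have hb := @seq_bound n n5 A B (fun t => congr1 _ (colper t)) (fun t => congr1 _ (colper t))
  (fun t => cnt_le5 f _ 1) (fun t => cnt_le5 f _ 2).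
have con : forall t, 2 <= t -> B t = 0 ->
  5 <= 3 * A t + A (t+1) + A (t-1) + 3 * B (t+1) + 3 * B (t-1) + B (t+2) + B (t-2).
  move=> t t2 hB; have := @colcon n n5 f (col n5 t) hdom hB.
  by rewrite !cp ?cp' //; lia.
have := hb con.
rewrite cost_cols.
have -> : \sum_(i < n) (A (n + i) + 2 * B (n + i)) = \sum_(c : 'I_n) (acnt f c + 2 * bcnt f c).
  apply: eq_bigr => i _; rewrite /A /B (_ : col n5 (n + i) = i) //.
  by apply: val_inj; rewrite /= addnC modnDr modn_small.
done.
Qed.
End Lower.

Definition base (k : nat) : seq nat := [:: if k == 0 then 2 else 0; 0; if k == 2 then 2 else 0; 0; 0].
Definition Lof (s : nat) := match s with 0 => 0 | 1 => 1 | 2 => 4 | _ => 7 end.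
Definition zer : seq nat := [:: 0; 0; 0; 0; 0].
Definition gadget (s e : nat) : seq nat :=
  match s, e with
  | 1, 0 => [:: 0; 0; 0; 0; 1]
  | 2, 2 => [:: 0; 0; 2; 2; 0]
  | 3, 6 => [:: 1; 0; 0; 0; 0]
  | 3, 5 => [:: 0; 0; 0; 0; 2]
  | 3, 3 => [:: 0; 2; 0; 0; 0]
  | 3, 1 => [:: 0; 0; 0; 2; 0]
  | _, _ => zer
  end.
Definition prof s e k := if e < Lof s then gadget s e else base k.
Definition P7 (x : nat) : seq nat :=
  match x with
  | 0 => [:: 2; 0; 0; 0; 0]
  | 2 => [:: 0; 0; 1; 0; 0]
  | 3 => [:: 0; 0; 0; 0; 1]
  | 4 => [:: 0; 1; 0; 0; 0]
  | 6 => [:: 0; 0; 0; 2; 0]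
  | _ => zer
  end.
Definition Pn (n x : nat) := if n == 7 then P7 x else prof (n %% 4) (n - 1 - x) (x %% 4).

Definition absd (d : nat) := if d <= 2 then 2 - d else d - 2.
Definition good (W : seq (seq nat)) :=
  all (fun r0 => has (fun d => has (fun r1 =>
     (0 < nth 0 (nth [::] W d) r1) && (cd 5 r0 r1 + absd d <= nth 0 (nth [::] W d) r1))
    (iota 0 5)) (iota 0 5)) (iota 0 5).
Definition win (n c0 : nat) := mkseq (fun d => Pn n ((c0 + n - 2 + d) %% n)) 5.

Lemma nth_le2 (l : seq nat) r : all (fun x => x <= 2) l -> nth 0 l r <= 2.
Proof.
move=> /allP H; case: (ltnP r (size l)) => h; first by apply: H; apply: mem_nth.
by rewrite nth_default.
Qed.

Lemma Pn_le2 n x r : nth 0 (Pn n x) r <= 2.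
Proof.
apply: nth_le2; rewrite /Pn; case: ifP => _.
  by case: x => [|[|[|[|[|[|[|x]]]]]]].
rewrite /prof; case: ifP => _.
  by case: (n %% 4) => [|[|[|[|s]]]]; case: (n - 1 - x) => [|[|[|[|[|[|[|e]]]]]]].
by case: (x %% 4) => [|[|[|k]]].
Qed.

Section Up.
Variable n : nat.
Hypothesis n5 : 5 <= n.
Local Notation V := ('I_5 * 'I_n)%type.
Local Notation E := (cart_adj (cycle_adj 5) (cycle_adj n)).

Definition fn : broadcast2 V := [ffun v : V => inord (nth 0 (Pn n v.2) v.1)].

Lemma fnE v : (fn v : nat) = nth 0 (Pn n v.2) v.1.
Proof. by rewrite ffunE inordK // ltnS Pn_le2. Qed.

Lemma mod_lt3 (x : nat) : x < n + n + n -> x %% n = if x < n then x else if x < n + n then x - n else x - n - n.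
Proof.
move=> h; case: ltnP => h1; first by rewrite modn_small.
case: ltnP => h2.
  have -> : x = 1 * n + (x - n) by lia.
  by rewrite modnMDl modn_small; lia.
have -> : x = 2 * n + (x - n - n) by lia.
by rewrite modnMDl modn_small; lia.
Qed.

Lemma cd_win (c0 d : nat) : c0 < n -> d < 5 -> cd n c0 ((c0 + n - 2 + d) %% n) <= absd d.
Proof.
move=> cn d5; rewrite mod_lt3; last by lia.
rewrite /cd /cdiff /absd.
case: d d5 => [|[|[|[|[|d]]]]] // _; ifs; lia.
Qed.

Lemma dom_of_windows : (forall c0, c0 < n -> good (win n c0)) -> dominating E fn.
Proof.
move=> hw; apply/forallP => -[r0 c0].
have := hw c0 (ltn_ord c0); rewrite /good => /allP /(_ r0).
rewrite mem_iota ltn_ord => /(_ isT) /hasP[d]; rewrite mem_iota add0n => d5 /hasP[r1].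
rewrite mem_iota add0n => r15.
rewrite /win nth_mkseq // => /andP[hpos hle].
have cn : (c0 + n - 2 + d) %% n < n by rewrite ltn_mod; lia.
apply/existsP; exists (Ordinal r15, Ordinal cn).
rewrite /hears fnE /= hpos /= ball_iff; last by lia.
rewrite /dst /=.
have := cd_win (ltn_ord c0) d5; lia.
Qed.

Definition psum (l : seq nat) := \sum_(r < 5) nth 0 l r.

Lemma cost_fn : cost fn = \sum_(x < n) psum (Pn n x).
Proof.
rewrite /cost (eq_bigr (fun v : V => (fun (r : 'I_5) (c : 'I_n) => nth 0 (Pn n c) r) v.1 v.2)); last by move=> [r c] _; rewrite fnE.
rewrite -(pair_bigA _ (fun (r : 'I_5) (c : 'I_n) => nth 0 (Pn n c) r)) /= exchange_big /=.
by apply: eq_bigr.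
Qed.

End Up.

Definition lsum (F : nat -> nat) n := sumn (map F (iota 0 n)).
Lemma ord_lsum (F : nat -> nat) n : \sum_(x < n) F x = lsum F n.
Proof. by rewrite -(big_mkord xpredT) /lsum sumnE big_map /index_iota subn0. Qed.

Definition costL n := lsum (fun x => lsum (nth 0 (Pn n x)) 5) n.

Lemma cost_fnL n (n5 : 5 <= n) : cost (fn n) = costL n.
Proof.
rewrite cost_fn (ord_lsum (fun x => psum (Pn n x))) /costL /lsum.
by congr sumn; apply: eq_map => x; rewrite /psum (ord_lsum (fun r => nth 0 (Pn n x) r)).
Qed.

Definition smallchk := all (fun n => (costL n == n) && all (fun c0 => good (win n c0)) (iota 0 n)) (iota 5 8).
Lemma smallchk_ok : smallchk. Proof. by vm_compute. Qed.

Definition F s m e0 := mkseq (fun d => if e0 + 2 < d then base (d - 3 - e0)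
   else prof s (e0 + 2 - d) ((m + 2 + d) %% 4)) 5.
Definition G s c0 := mkseq (fun d => if d + c0 < 2 then prof s (1 - c0 - d) ((s + 3 - (1 - c0 - d)) %% 4)
   else base (c0 + d - 2)) 5.
Definition chkF := all (fun s => all (fun m => all (fun e =>
   ((e == 9) || (m == (s + 11 - e) %% 4)) ==> good (F s m e)) (iota 0 10)) (iota 0 4)) (iota 0 4).
Definition chkG := all (fun s => all (fun c0 => good (G s c0)) (iota 0 2)) (iota 0 4).
Lemma chkF_ok : chkF. Proof. by vm_compute. Qed.
Lemma chkG_ok : chkG. Proof. by vm_compute. Qed.
Definition T7 s := lsum (fun i => lsum (nth 0 (prof s (6 - i) ((s + 1 + i) %% 4))) 5) 7.
Lemma T7_ok : all (fun s => T7 s + odd (s + 1) == 7) (iota 0 4). Proof. by vm_compute. Qed.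

Lemma prof_base s e k : 7 <= e -> prof s e k = base k.
Proof. by move=> h; rewrite /prof; case: ifP => // h2; move: h2; case: s => [|[|[|s]]] /=; lia. Qed.

Definition hb x := lsum (nth 0 (base (x %% 4))) 5.

Lemma hbE x : hb x = if odd x then 0 else 2.
Proof.
rewrite /hb -(odd_mod x (d:=4)) //.
by move: (ltn_pmod x (isT : 0 < 4)); case: (x %% 4) => [|[|[|[|k]]]].
Qed.

Lemma sum_hb N : sumn (map hb (iota 0 N)) = N + odd N.
Proof.
elim: N => [|N IH] //.
rewrite -addn1 iotaD map_cat sumn_cat IH /= hbE addn0 oddD /=.
rewrite (addn1 N) /=.
by case: (odd N) => /=; lia.
Qed.

Section Large.
Variable n : nat.
Hypothesis n13 : 13 <= n.

Let q := n %/ 4.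
Let s := n %% 4.
Lemma nqs : n = q * 4 + s. Proof. exact: divn_eq. Qed.
Lemma s4 : s < 4. Proof. by rewrite ltn_mod. Qed.

Lemma PnE x : Pn n x = prof s (n - 1 - x) (x %% 4).
Proof. by rewrite /Pn; have -> : (n == 7) = false by lia. Qed.

Lemma mod4_shift a b : a = 4 * q + b - 4 * (q - (a + 4 - b) %/ 4) -> True.
Proof. done. Qed.

Lemma win_start c0 : c0 < 2 -> win n c0 = G s c0.
Proof.
move=> c2; rewrite /win /G /mkseq; apply/eq_in_map => d; rewrite mem_iota add0n => d5.
have hq := nqs; have hs := s4.
case: ifP => hd.
- have hx : (c0 + n - 2 + d) %% n = c0 + n - 2 + d by rewrite modn_small; lia.
  rewrite hx PnE (_ : n - 1 - (c0 + n - 2 + d) = 1 - c0 - d); last by lia.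
  congr prof.
  have -> : c0 + n - 2 + d = (q - 1) * 4 + (s + 3 - (1 - c0 - d)) by lia.
  by rewrite modnMDl.
- have hx : (c0 + n - 2 + d) %% n = c0 + d - 2.
    have -> : c0 + n - 2 + d = 1 * n + (c0 + d - 2) by lia.
    by rewrite modnMDl modn_small; lia.
  rewrite hx PnE prof_base; last by lia.
  by rewrite modn_small //; lia.
Qed.

Lemma win_mid c0 : 2 <= c0 -> c0 < n -> win n c0 = F s (c0 %% 4) (minn (n - 1 - c0) 9).
Proof.
move=> c2 cn; rewrite /win /F /mkseq; apply/eq_in_map => d; rewrite mem_iota add0n => d5.
have hq := nqs; have hs := s4.
have hm : (c0 %% 4 + 2 + d) %% 4 = (c0 - 2 + d) %% 4.
  rewrite -addnA modnDml (_ : c0 + (2 + d) = (c0 - 2 + d) + 4); last by lia.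
  by rewrite modnDr.
case: ifP => hd.
- have hx : (c0 + n - 2 + d) %% n = d - 3 - (n - 1 - c0).
    have -> : c0 + n - 2 + d = 2 * n + (d - 3 - (n - 1 - c0)) by lia.
    by rewrite modnMDl modn_small; lia.
  rewrite hx PnE prof_base; last by lia.
  rewrite modn_small; last by lia.
  congr base; lia.
- have hx : (c0 + n - 2 + d) %% n = c0 - 2 + d.
    have -> : c0 + n - 2 + d = 1 * n + (c0 - 2 + d) by lia.
    by rewrite modnMDl modn_small; lia.
  rewrite hx PnE hm.
  case: (leqP (n - 1 - c0) 9) => he.
  + by congr prof; lia.
  + by rewrite !prof_base //; lia.
Qed.

Lemma large_windows c0 : c0 < n -> good (win n c0).
Proof.
move=> cn; have hq := nqs; have hs := s4.
case: (ltnP c0 2) => c2.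
  rewrite win_start //.
  move: chkG_ok => /allP /(_ s); rewrite mem_iota add0n => /(_ hs) /allP /(_ c0).
  by rewrite mem_iota add0n => /(_ c2).
rewrite win_mid //.
move: chkF_ok => /allP /(_ s); rewrite mem_iota add0n => /(_ hs) /allP /(_ (c0 %% 4)).
rewrite mem_iota add0n ltn_mod => /(_ isT) /allP /(_ (minn (n - 1 - c0) 9)).
rewrite mem_iota add0n => /(_ (_ : _ < 10)) /implyP; apply; first by lia.
case: (leqP 9 (n - 1 - c0)) => he.
  by [].
apply/orP; right.
have hc : c0 = (q - 3) * 4 + (s + 11 - (n - 1 - c0)) by lia.
by rewrite {1}hc modnMDl.
Qed.

Lemma large_cost : costL n = n.
Proof.
have hq := nqs; have hs := s4.
rewrite /costL /lsum.
have hI : iota 0 n = iota 0 (n - 7) ++ iota (0 + (n - 7)) 7.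
  by rewrite -iotaD subnK //; lia.
rewrite add0n in hI.
rewrite hI map_cat sumn_cat.
have -> : [seq lsum (nth 0 (Pn n x)) 5 | x <- iota 0 (n - 7)] = map hb (iota 0 (n - 7)).
  apply/eq_in_map => x; rewrite mem_iota add0n => hx.
  by rewrite PnE prof_base //; lia.
rewrite sum_hb.
have -> : iota (n - 7) 7 = map (addn (n - 7)) (iota 0 7) by rewrite -iotaDl addn0.
rewrite -map_comp.
have -> : [seq ((fun x => lsum (nth 0 (Pn n x)) 5) \o addn (n - 7)) i | i <- iota 0 7]
   = [seq lsum (nth 0 (prof s (6 - i) ((s + 1 + i) %% 4))) 5 | i <- iota 0 7].
  apply/eq_in_map => i; rewrite mem_iota add0n => hi /=.
  rewrite PnE (_ : n - 1 - (n - 7 + i) = 6 - i); last by lia.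
  by rewrite (_ : n - 7 + i = (q - 2) * 4 + (s + 1 + i)) ?modnMDl //; lia.
have hT := T7_ok; move: hT => /allP /(_ s); rewrite mem_iota add0n => /(_ hs) /eqP hT.
rewrite /T7 in hT.
have ho : odd (n - 7) = odd (s + 1).
  by rewrite (_ : n - 7 = (q - 2) * 4 + (s + 1)) ?oddD ?oddM ?andbF //; lia.
rewrite ho -/(lsum (fun i => lsum (nth 0 (prof s (6 - i) ((s + 1 + i) %% 4))) 5) 7); lia.
Qed.
End Large.

Lemma upper_ex (n : nat) (n5 : 5 <= n) :
  dominating (cart_adj (cycle_adj 5) (cycle_adj n)) (fn n) /\ cost (fn n) = n.
Proof.
case: (leqP n 12) => hn.
  have hmem : n \in iota 5 8 by rewrite mem_iota; lia.
  move: smallchk_ok => /allP /(_ n hmem) /andP[/eqP hc /allP hw].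
  split; last by rewrite cost_fnL.
  apply: dom_of_windows => // c0 c0n; apply: hw; by rewrite mem_iota.
split; last by rewrite cost_fnL // large_cost.
apply: dom_of_windows => // c0 c0n; exact: large_windows.
Qed.

Lemma bigmin_le (T : eqType) (r : seq T) (P : pred T) (F : T -> nat) d x :
  x \in r -> P x -> \big[minn/d]_(i <- r | P i) F i <= F x.
Proof.
elim: r => [|y r IH] //; rewrite inE big_cons => /orP[/eqP <-|hx] hP.
  by rewrite hP geq_minl.
case: ifP => _; last exact: IH.
by rewrite geq_min IH ?orbT.
Qed.

Unset Implicit Arguments.

Theorem theorem4p5 (n : nat) (hn : 5 <= n) :
  gamma_b2 (cart_adj (cycle_adj 5) (cycle_adj n)) = n.
Proof.
have [hd hc] := upper_ex hn.
apply/eqP; rewrite eqn_leq; apply/andP; split.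
  apply: (@leq_trans (cost (fn n))); last by rewrite hc.
  by rewrite /gamma_b2; apply: bigmin_le => //; rewrite mem_index_enum.
rewrite /gamma_b2; apply: (big_ind (fun x => n <= x)).
- rewrite card_prod !card_ord; lia.
- by move=> x y hx hy; rewrite leq_min hx hy.
- by move=> f hf; exact: lower.
Qed.
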